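(* Let $G$ be a connected hypergraph, let $u\in V(G)$, and let $v,w$ be two neighbors of $u$ that are not adjacent to each other. Let $x=x(G)$. Then $x_w+x_u-x_v>0$.
   Context: A (simple) hypergraph has edges that are vertex subsets of size at least two; two vertices are adjacent (neighbors) if some edge contains both. A loose path is an alternating sequence $(v_0,e_1,v_1,\dots,e_p,v_p)$ of distinct vertices and distinct edges with $v_{i-1},v_i\in e_i$ and $e_i\cap e_j=\emptyset$ whenever $j>i+1$; $G$ is connected if any two vertices are joined by one, and $d_G(u,v)$ is the length of a shortest loose path from $u$ to $v$. $D(G)=(d_G(u,v))$ is the distance matrix, and $x(G)$ is the unique unit positive eigenvector of $D(G)$ for its largest eigenvalue (distance Perron vector). *)

(* Defs.v *)
From HB Require Import structures.
From mathcomp Require Import all_boot all_order all_algebra.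
Set Implicit Arguments. Unset Strict Implicit. Unset Printing Implicit Defensive.
Import Order.TTheory GRing.Theory Num.Theory.

Definition hypergraph (n : nat) (E : {set {set 'I_n}}) : Prop :=
  forall e, e \in E -> 2 <= #|e|.

Definition adjacent (n : nat) (E : {set {set 'I_n}}) (a b : 'I_n) : bool :=
  (a != b) && [exists e in E, (a \in e) && (b \in e)].

(* A loose path of length p from u to v: vertices vs = (v_0,...,v_p),
   edges es = (e_1,...,e_p) stored 0-indexed (nth es k = e_{k+1}). *)
Definition loose_path (n : nat) (E : {set {set 'I_n}}) (u v : 'I_n) (p : nat)
  (vs : p.+1.-tuple 'I_n) (es : p.-tuple {set 'I_n}) : bool :=
  [&& uniq vs, uniq es, all (fun e => e \in E) es,
      nth u vs 0 == u, nth u vs p == v,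
      [forall i : 'I_p, (nth u vs i \in nth set0 es i)
                         && (nth u vs i.+1 \in nth set0 es i)] &
      [forall i : 'I_p, forall j : 'I_p,
          (i.+1 < j) ==> [disjoint nth set0 es i & nth set0 es j]]].

Definition has_loose_path (n : nat) (E : {set {set 'I_n}}) (u v : 'I_n) (p : nat) : bool :=
  [exists vs : p.+1.-tuple 'I_n, exists es : p.-tuple {set 'I_n}, loose_path E u v vs es].

Definition connected (n : nat) (E : {set {set 'I_n}}) : Prop :=
  forall u v : 'I_n, exists p, has_loose_path E u v p.

(* d_G(u,v): least p with a loose path of length p (a loose path has
   p+1 distinct vertices, so p < n; the value n means "no path"). *)
Definition hdist (n : nat) (E : {set {set 'I_n}}) (u v : 'I_n) : nat :=
  find (has_loose_path E u v) (iota 0 n).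

Local Open Scope ring_scope.

Definition dist_matrix (R : nzRingType) (n : nat) (E : {set {set 'I_n}}) : 'M[R]_n :=
  \matrix_(i, j) (hdist E i j)%:R.

Definition distance_perron_vector (R : realFieldType) (n : nat)
  (E : {set {set 'I_n}}) (x : 'cV[R]_n) : Prop :=
  exists rho : R,
    [/\ eigenvalue (dist_matrix R E) rho,
        (forall a : R, eigenvalue (dist_matrix R E) a -> a <= rho),
        dist_matrix R E *m x = rho *: x,
        (forall i, 0 < x i 0) &
        \sum_i (x i 0) ^+ 2 = 1].

(* Main.v *)
Require Import Defs.
From HB Require Import structures.
From mathcomp Require Import all_boot all_order all_algebra.
From mathcomp Require Import zify lra.
From Stdlib Require Import Classical.
Import Order.TTheory GRing.Theory Num.Theory.

Section G.
Variable n : nat.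
Variable E : {set {set 'I_n}}.

Definition walk (f : nat -> 'I_n) a b q :=
  [/\ f 0 = a, f q = b & forall i, i < q -> adjacent E (f i) (f i.+1)].

Lemma splice f a b q i j l r : walk f a b q -> i < j -> j <= q ->
  walk r (f i) (f j) l ->
  walk (fun k => if k <= i then f k else if k <= i + l then r (k - i)
                 else f (k - (i + l) + j)) a b (q - (j - i) + l).
Proof.
move=> [f0 fq fa] ij jq [r0 rl ra].
have fa' : forall x y, x < q -> y = x.+1 -> adjacent E (f x) (f y).
  by move=> x y Hx ->; apply: fa.
have ra' : forall x y, x < l -> y = x.+1 -> adjacent E (r x) (r y).
  by move=> x y Hx ->; apply: ra.
split.
- by rewrite leq0n.
- case: ifP => H1.
    have el : l = 0 by lia.
    have ej : j = q by lia.
    have -> : q - (j - i) + l = i by lia.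
    by rewrite -fq -ej -rl el r0.
  case: ifP => H2.
    have -> : q - (j - i) + l - i = l by lia.
    by rewrite rl -fq; congr f; lia.
  by rewrite -fq; congr f; lia.
- move=> k Hk.
  case: ifP => H1; case: ifP => H2; try (case: ifP => H3); try (case: ifP => H4);
    try (exfalso; lia).
  + apply: fa'; lia.
  + have ek : k = i by lia.
    rewrite ek -r0; apply: ra'; lia.
  + have ek : k = i by lia.
    have el : l = 0 by lia.
    rewrite ek.
    have -> : f i = f j by rewrite -r0 -rl el.
    apply: fa'; lia.
  + apply: ra'; lia.
  + have ek : k = i + l by lia.
    rewrite ek.
    have -> : i + l - i = l by lia.
    rewrite rl; apply: fa'; lia.
  + apply: fa'; lia.
Qed.

Lemma walk_loose q : forall f a b, walk f a b q ->
  exists2 p, p <= q & has_loose_path E a b p.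
Proof.
elim/ltn_ind: q => q IH f a b W.
case: (classic (exists i j l r, [/\ i < j, j <= q, l < j - i & walk r (f i) (f j) l]))
  => [[i [j [l [r [ij jq lji Wr]]]]]|NS].
  have [|p Hp Hl] := IH _ _ _ _ _ (@splice _ _ _ _ _ _ _ _ W ij jq Wr); first lia.
  by exists p => //; lia.
case: W => f0 fq fa.
have N0 : forall i j, i < j -> j <= q -> f i != f j.
  move=> i j ij jq; apply/eqP => e; apply: NS.
  exists i, j, 0, (fun _ => f i); split; [exact ij|exact jq|lia|].
  by split.
have N1 : forall i j, i.+1 < j -> j <= q -> ~~ adjacent E (f i) (f j).
  move=> i j ij jq; apply/negP => A; apply: NS.
  exists i, j, 1, (fun k => if k == 0 then f i else f j); split; [lia|lia|lia|].
  split => //. by move=> k; rewrite ltnS leqn0 => /eqP ->.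
have N2 : forall i j y, i.+2 < j -> j <= q -> adjacent E (f i) y ->
   adjacent E y (f j) -> False.
  move=> i j y ij jq A1 A2; apply: NS.
  exists i, j, 2, (fun k => if k == 0 then f i else if k == 1 then y else f j).
  split; [lia|lia|lia|].
  split => //. by move=> k; case: k => [|[|k]] //=.
pose e k := odflt set0 [pick X in E | (f k \in X) && (f k.+1 \in X)].
have He : forall k, k < q -> [/\ e k \in E, f k \in e k & f k.+1 \in e k].
  move=> k Hk; have := fa k Hk.
  rewrite /adjacent => /andP[_ /existsP[X /andP[XE /andP[h1 h2]]]].
  rewrite /e; case: pickP => [Y /andP[? /andP[? ?]] | /(_ X)] //=.
  by rewrite XE h1 h2.
have Adj : forall X y z, X \in E -> y \in X -> z \in X -> y != z -> adjacent E y z.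
  move=> X y z XE yX zX yz; rewrite /adjacent yz /=.
  by apply/existsP; exists X; rewrite XE yX zX.
exists q => //.
pose vs : q.+1.-tuple 'I_n := Tuple (introT eqP (size_mkseq f q.+1)).
pose es : q.-tuple {set 'I_n} := Tuple (introT eqP (size_mkseq e q)).
have vsE : (vs : seq _) = mkseq f q.+1 by [].
have esE : (es : seq _) = mkseq e q by [].
apply/existsP; exists vs; apply/existsP; exists es.
rewrite /loose_path vsE esE.
apply/andP; split.
  apply/(uniqP a) => i j; rewrite !inE size_mkseq => Hi Hj.
  rewrite !nth_mkseq // => eij.
  case: (ltngtP i j) => // H.
    by have := N0 i j H; rewrite eij eqxx; lia.
  by have := N0 j i H; rewrite eij eqxx; lia.
apply/andP; split.
  apply/(uniqP set0) => i j; rewrite !inE size_mkseq => Hi Hj.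
  rewrite !nth_mkseq // => eij.
  have key : forall i j, i < j -> j < q -> e i = e j -> False.
    move=> i' j' ij jq eq.
    have [E1 A1 _] := He i' (ltn_trans ij jq).
    have [_ _ B1] := He j' jq.
    rewrite -eq in B1.
    have := N1 i' j'.+1; rewrite (Adj _ _ _ E1 A1 B1) ?N0 //; lia.
  case: (ltngtP i j) => // H; first by exfalso; apply: (key i j).
  by exfalso; apply: (key j i).
apply/andP; split.
  apply/allP => X; rewrite /mkseq => /mapP[k]; rewrite mem_iota => /andP[_ Hk] ->.
  by have [] := He k Hk.
apply/andP; split; first by rewrite nth_mkseq // f0.
apply/andP; split; first by rewrite nth_mkseq // fq.
apply/andP; split.
  apply/forallP => i; have Hi := ltn_ord i; rewrite !nth_mkseq; [|lia..].
  by have [_ ? ?] := He i (ltn_ord i); apply/andP.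
apply/forallP => i; apply/forallP => j; apply/implyP => ij.
have Hi := ltn_ord i; have Hj := ltn_ord j.
rewrite !nth_mkseq; [|lia..].
have [Ei1 Ei2 Ei3] := He i (ltn_ord i).
have [Ej1 Ej2 Ej3] := He j (ltn_ord j).
rewrite disjoint_subset; apply/subsetP => y y1; rewrite !inE; apply/negP => y2.
have jq : j < q by apply: ltn_ord.
case: (eqVneq y (f i)) => [eyi|nyi].
  rewrite eyi in y2.
  have := N1 i j.+1; rewrite (Adj _ _ _ Ej1 y2 Ej3) ?N0 //; lia.
case: (eqVneq y (f j.+1)) => [eyj|nyj].
  rewrite eyj in y1.
  have := N1 i j.+1; rewrite (Adj _ _ _ Ei1 Ei2 y1) ?N0 //; lia.
apply: (N2 i j.+1 y); [lia|lia| |].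
  by apply: (Adj _ _ _ Ei1 Ei2 y1); rewrite eq_sym.
exact: (Adj _ _ _ Ej1 y2 Ej3).
Qed.


Lemma loose_walk a b p : has_loose_path E a b p -> exists f, walk f a b p.
Proof.
move=> /existsP[vs /existsP[es]].
rewrite /loose_path => /andP[Uv /andP[Ue /andP[Ae /andP[H0 /andP[Hp /andP[Hin Hdis]]]]]].
exists (fun k => nth a vs k); split; [exact/eqP|exact/eqP|].
move=> k Hk; have /andP[h1 h2] := forallP Hin (Ordinal Hk).
rewrite /adjacent nth_uniq ?size_tuple //; last lia.
rewrite (_ : (k == k.+1) = false) /=; last lia.
apply/existsP; exists (nth set0 es k); rewrite h1 h2 andbT.
rewrite andbT; have := allP Ae (nth set0 es k); apply.
by apply: mem_nth; rewrite size_tuple.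
Qed.

Lemma path_lt_n a b p : has_loose_path E a b p -> p < n.
Proof.
move=> /existsP[vs /existsP[es]] /andP[Uv _].
have := uniq_leq_size Uv (fun y _ => mem_enum 'I_n y).
by rewrite size_tuple size_enum_ord.
Qed.

Lemma hdist_le a b p : has_loose_path E a b p -> hdist E a b <= p.
Proof.
move=> H; have pn := path_lt_n _ _ _ H; rewrite leqNgt; apply/negP => Hlt.
have := before_find 0 Hlt; rewrite nth_iota // add0n H //.
Qed.

Lemma hdist_path a b : connected E -> has_loose_path E a b (hdist E a b).
Proof.
move=> C; have [p H] := C a b; have pn := path_lt_n _ _ _ H.
have hs : has (has_loose_path E a b) (iota 0 n).
  by apply/hasP; exists p => //; rewrite mem_iota; lia.
have := nth_find 0 hs; rewrite nth_iota ?add0n //.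
by move: hs; rewrite has_find size_iota.
Qed.

Lemma dist_step v u z : connected E -> adjacent E v u ->
  hdist E v z <= (hdist E u z).+1.
Proof.
move=> C A; have [f [f0 fk fa]] := loose_walk _ _ _ (hdist_path u z C).
have W : walk (fun i => if i is i'.+1 then f i' else v) v z (hdist E u z).+1.
  split => //; move=> [|i] Hi /=; first by rewrite f0.
  by apply: fa.
have [p Hp Hl] := walk_loose _ _ _ _ W.
exact: leq_trans (hdist_le _ _ _ Hl) Hp.
Qed.

Lemma hdist_self a : hdist E a a = 0.
Proof.
have W : walk (fun _ => a) a a 0 by split.
have [p Hp Hl] := walk_loose _ _ _ _ W.
by apply/eqP; rewrite -leqn0; apply: leq_trans (hdist_le _ _ _ Hl) Hp.
Qed.

Lemma hdist_pos a b : connected E -> a != b -> 0 < hdist E a b.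
Proof.
move=> C ab; rewrite lt0n; apply/eqP => H; have := hdist_path a b C; rewrite H.
move=> /existsP[vs /existsP[es]].
move=> /andP[_ /andP[_ /andP[_ /andP[/eqP H0 /andP[/eqP Hp _]]]]].
by move/eqP: ab; apply; rewrite -H0 -Hp.
Qed.

Lemma adj_sym a b : adjacent E a b -> adjacent E b a.
Proof.
rewrite /adjacent eq_sym => /andP[-> /existsP[X /andP[XE /andP[h1 h2]]]].
by apply/existsP; exists X; rewrite XE h1 h2.
Qed.

End G.

Local Open Scope ring_scope.

Lemma aux0 (R : realFieldType) (r X : R) : 0 < X -> 0 <= r * X -> 0 <= r.
Proof. move=> h1 h2; nra. Qed.
Lemma aux1 (R : realFieldType) (A B C X : R) :
  0 < X -> 1 <= A -> C <= B + 1 -> 0 <= (A + B - C) * X.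
Proof. move=> h1 h2 h3; nra. Qed.
Lemma aux2 (R : realFieldType) (A B C X : R) :
  0 < X -> C <= B + 1 -> A = 0 -> 0 - X <= (A + B - C) * X.
Proof. move=> h1 h2 ->; nra. Qed.
Lemma aux3 (R : realFieldType) (A B C X : R) :
  0 < X -> 1 <= A -> 1 <= B -> C = 0 -> X - 0 <= (A + B - C) * X.
Proof. move=> h1 h2 h3 ->; nra. Qed.

Theorem lemma4p3 (R : realFieldType) (n : nat) (E : {set {set 'I_n}})
  (u v w : 'I_n) (x : 'cV[R]_n) :
  hypergraph E -> connected E ->
  adjacent E u v -> adjacent E u w -> v != w -> ~~ adjacent E v w ->
  distance_perron_vector E x ->
  0 < x w 0 + x u 0 - x v 0.
Proof.
move=> _ C Huv Huw vw _ [rho [_ _ Heig Hpos _]].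
have Hi : forall i, \sum_j (hdist E i j)%:R * x j 0 = rho * x i 0.
  move=> i; have := congr1 (fun M : 'M[R]_(n,1) => M i 0) Heig; rewrite !mxE => <-.
  by apply: eq_bigr => j _; rewrite !mxE.
have key : rho * (x w 0 + x u 0 - x v 0) =
   \sum_z (((hdist E w z)%:R + (hdist E u z)%:R - (hdist E v z)%:R) * x z 0).
  rewrite mulrBr mulrDr -!Hi -big_split -sumrB /=.
  by apply: eq_bigr => z _; rewrite mulrBl mulrDl.
have rho0 : 0 <= rho.
  apply: (@aux0 _ _ _ (Hpos v)).
  by rewrite -Hi; apply: sumr_ge0 => j _; apply: mulr_ge0 => //; apply: ltW.
have T : forall z, ((hdist E v z)%:R : R) <= (hdist E u z)%:R + 1.
  move=> z; rewrite natr1 ler_nat; apply: dist_step => //.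
  by apply: adj_sym.
have uv : u != v by case/andP: Huv.
have P1 : forall a b, a != b -> (1 : R) <= (hdist E a b)%:R.
  by move=> a b ab; rewrite ler1n; apply: hdist_pos.
have G0 : forall z, (hdist E z z)%:R = 0 :> R by move=> z; rewrite hdist_self.
have lb : \sum_z ((if z == v then x v 0 else 0) - (if z == w then x w 0 else 0))
   <= \sum_z (((hdist E w z)%:R + (hdist E u z)%:R - (hdist E v z)%:R) * x z 0).
  rewrite ler_sum // => z _.
  case: (eqVneq z v) => [->|zv].
    rewrite (negbTE vw); apply: aux3; [exact: Hpos|apply: P1; by rewrite eq_sym|
       exact: P1|exact: G0].
  case: (eqVneq z w) => [->|zw].
    by apply: aux2; [exact: Hpos|exact: T|exact: G0].
  rewrite subr0; apply: aux1; [exact: Hpos| |exact: T].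
  by apply: P1; rewrite eq_sym.
rewrite sumrB -!big_mkcond /= !big_pred1_eq in lb.
rewrite ltNge; apply/negP => HS.
have : rho * (x w 0 + x u 0 - x v 0) <= 0.
  by rewrite mulr_ge0_le0.
rewrite key.
move=> Hs; have := le_trans lb Hs; have := Hpos u; have := Hpos w.
move: HS; clear; lra.
Qed.
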